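(* Let $\Sigma$ be a ranked signature containing a constant, let $k$ be the maximal arity of a letter of $\Sigma$, and let $u=v$ be a context equation over $\Sigma$. Suppose $u = v$ has a solution $\sigma'$ over a signature $\Sigma'\supseteq\Sigma$ such that every letter of $\Sigma'\setminus\Sigma$ does not occur in $u=v$ and has arity at most $k$. Then $u = v$ also has a solution over $\Sigma$, which is at most $k$ times larger.
   Context: A ranked signature assigns an arity $\mathrm{ar}(f)\in\mathbb N$ to each letter. $\Omega$ is a special constant not in any signature. Context variables have arity $1$ and variables arity $0$. Over a signature $\Delta$: a ground term is a finite ordered tree labelled by $\Delta$ with each node labelled $f$ having $\mathrm{ar}(f)$ children; a ground context is a ground term over $\Delta\cup\{\Omega\}$ with exactly one $\Omega$; for a ground context $s$ and ground term/context $t$, $st$ replaces $\Omega$ in $s$ by $t$. Terms are well-formed trees over $\Sigma$, variables and context variables; a context equation is $u=v$ with $u,v$ terms. A substitution over $\Delta$ assigns a ground context over $\Delta$ to each context variable and a ground term over $\Delta$ to each variable, extended by $\sigma(a)=a$, $\sigma(f(t_1,\dots,t_m))=f(\sigma(t_1),\dots,\sigma(t_m))$, $\sigma(Xt)=\sigma(X)\sigma(t)$; it is a solution if $\sigma(u)=\sigma(v)$. The size of a solution is the number of nodes of $\sigma(u)$. *)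

(* Defs.v *)
From mathcomp Require Import all_boot.
Set Implicit Arguments. Unset Strict Implicit. Unset Printing Implicit Defensive.

(* Letters live in a universe type [A] (an eqType) equipped with an arity
   function [ar]; a (ranked) signature is a finite list of letters. *)

Section Defs.
Variable A : eqType.
Variable ar : A -> nat.

(* Trees labelled by letters or by the special constant Omega (= None). *)
Inductive tree : Type := Node : option A -> seq tree -> tree.

Fixpoint nnodes (t : tree) : nat :=
  let: Node _ ts := t in (sumn (map nnodes ts)).+1.

Fixpoint omegas (t : tree) : nat :=
  let: Node o ts := t in (if o is None then 1 else 0) + sumn (map omegas ts).

Fixpoint wf_tree (D : seq A) (t : tree) : bool :=
  let: Node o ts := t in
  match o with
  | Some f => [&& f \in D, size ts == ar f & all (wf_tree D) ts]
  | None => size ts == 0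
  end.

Definition ground_term (D : seq A) (t : tree) : bool :=
  wf_tree D t && (omegas t == 0).

Definition ground_context (D : seq A) (t : tree) : bool :=
  wf_tree D t && (omegas t == 1).

Fixpoint fill (s t : tree) : tree :=
  let: Node o ss := s in
  match o with
  | None => t
  | Some f => Node (Some f) (map (fun s' => fill s' t) ss)
  end.

Variables V C : Type.
Inductive term : Type :=
  | TApp : A -> seq term -> term
  | TVar : V -> term
  | TCVar : C -> term -> term.

Fixpoint wf_term (D : seq A) (t : term) : bool :=
  match t with
  | TApp f ts => [&& f \in D, size ts == ar f & all (wf_term D) ts]
  | TVar _ => true
  | TCVar _ t' => wf_term D t'
  end.

Fixpoint subst (sv : V -> tree) (sc : C -> tree) (t : term) : tree :=
  match t with
  | TApp f ts => Node (Some f) (map (subst sv sc) ts)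
  | TVar x => sv x
  | TCVar X t' => fill (sc X) (subst sv sc t')
  end.

Definition substitution_over (D : seq A) (sv : V -> tree) (sc : C -> tree) : Prop :=
  (forall x, ground_term D (sv x)) /\ (forall X, ground_context D (sc X)).

Definition solution_over (D : seq A) (sv : V -> tree) (sc : C -> tree)
  (u v : term) : Prop :=
  substitution_over D sv sc /\ subst sv sc u = subst sv sc v.

Fixpoint occurs (f : A) (t : term) : bool :=
  match t with
  | TApp g ts => (g == f) || has (occurs f) ts
  | TVar _ => false
  | TCVar _ t' => occurs f t'
  end.

End Defs.

(* Main.v *)
Require Import Defs.
From mathcomp Require Import all_boot.
From mathcomp Require Import zify.

Set Implicit Arguments. Unset Strict Implicit. Unset Printing Implicit Defensive.

Section Aux.
Variable A : eqType.
Variable ar : A -> nat.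

Definition tree_ind2 (P : tree A -> Prop)
  (HP : forall o ts, List.Forall P ts -> P (Node o ts)) : forall t, P t :=
  fix F t := match t with Node o ts => HP o ts
    ((fix G ts := match ts return List.Forall P ts with
       | [::] => List.Forall_nil _
       | t :: ts' => List.Forall_cons _ (F t) (G ts') end) ts) end.

Lemma Forall_map_eq (T U : Type) (f1 f2 : T -> U) l :
  List.Forall (fun x => f1 x = f2 x) l -> map f1 l = map f2 l.
Proof. by elim=> //= x l' -> _ ->. Qed.

Variables V C : Type.

Definition term_ind2 (P : term A V C -> Prop)
  (HA : forall f ts, List.Forall P ts -> P (TApp f ts))
  (HV : forall x, P (TVar _ _ x))
  (HC : forall X t, P t -> P (TCVar X t)) : forall t, P t :=
  fix F t := match t with
  | TApp f ts => HA f ts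
    ((fix G ts := match ts return List.Forall P ts with
       | [::] => List.Forall_nil _
       | t :: ts' => List.Forall_cons _ (F t) (G ts') end) ts)
  | TVar x => HV x
  | TCVar X t => HC X t (F t) end.

Variables (Sigma Sigma' : seq A) (k : nat) (g c : A).

Definition cnode : tree A := Node (Some c) [::].

Fixpoint h (t : tree A) : tree A :=
  let: Node o ts := t in
  match o with
  | None => Node None (map h ts)
  | Some f => if f \in Sigma then Node (Some f) (map h ts)
              else if ts is [::] then cnode
              else Node (Some g) (map h ts ++ nseq (k - size ts) cnode)
  end.

Lemma h_fill s t : h (fill s t) = fill (h s) (h t).
Proof.
elim/tree_ind2: s => [[f|] ss IH] //=.
have E : map h (map (fun s => fill s t) ss) = map (fun s => fill s (h t)) (map h ss).
  by rewrite -!map_comp; apply: Forall_map_eq.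
case: ifP => _; first by rewrite E.
case: ss IH E => // x l IH E.
change (Node (Some g) (map h (map (fun s => fill s t) (x::l)) ++ nseq (k - size (map (fun s => fill s t) (x::l))) cnode) = fill (Node (Some g) (map h (x::l) ++ nseq (k - size (x::l)) cnode)) (h t)).
rewrite E size_map /= map_cat; do 3 f_equal.
by elim: (k - _) => //= n <-.
Qed.

Lemma sumn_cat s1 s2 : sumn (s1 ++ s2) = sumn s1 + sumn s2.
Proof. by elim: s1 => //= x s ->; rewrite addnA. Qed.

Lemma h_omegas t : omegas (h t) = omegas t.
Proof.
elim/tree_ind2: t => o ts IH.
have E : sumn (map (@omegas A) (map h ts)) = sumn (map (@omegas A) ts).
  by elim: IH => //= x l Hx _ ->; rewrite Hx.
case: o => [f|] /=; last by rewrite E.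
case: ifP => _ /=; first by rewrite E.
case: ts IH E => //= x l IH E.
have Z : sumn (map (@omegas A) (nseq (k - (size l).+1) cnode)) = 0.
  by elim: (k - _) => //= n ->.
rewrite map_cat sumn_cat Z; lia.
Qed.

Lemma h_size t : nnodes (h t) <= maxn k 1 * nnodes t.
Proof.
have K1 : 0 < maxn k 1 by rewrite leq_max orbT.
elim/tree_ind2: t => o ts IH.
have E : sumn (map (@nnodes A) (map h ts)) <= maxn k 1 * sumn (map (@nnodes A) ts).
  elim: IH => //= x l Hx _ IHl; rewrite mulnDr; exact: leq_add.
have E2 : (sumn (map (@nnodes A) (map h ts))).+1 <= maxn k 1 * (sumn (map (@nnodes A) ts)).+1.
  by rewrite mulnSr; move: E K1; lia.
case: o => [f|] //=.
case: ifP => _ //.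
case: ts IH E E2 => [|x l] IH E E2 /=; first by rewrite muln1.
rewrite map_cat sumn_cat.
have -> : sumn (map (@nnodes A) (nseq (k - (size l).+1) cnode)) = k - (size l).+1.
  by elim: (k - _) => //= n ->.
rewrite mulnSr.
have : (k - (size l).+1).+1 <= maxn k 1.
  have := leq_maxl k 1; lia.
move: E => /=; lia.
Qed.

Hypotheses (cS : c \in Sigma) (arc : ar c = 0) (gS : g \in Sigma) (arg : ar g = k)
  (new : forall f, f \in Sigma' -> f \notin Sigma -> ar f <= k).

Lemma h_wf t : wf_tree ar Sigma' t -> wf_tree ar Sigma (h t).
Proof.
elim/tree_ind2: t => o ts IH.
have E : all (wf_tree ar Sigma') ts -> all (wf_tree ar Sigma) (map h ts).
  by elim: IH => //= x l Hx _ IHl /andP[/Hx -> /IHl].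
case: o => [f|] /=; last by rewrite size_map.
move=> /and3P[fS /eqP sz aw].
case: ifP => fS2.
  by rewrite /= fS2 size_map sz eqxx E.
case: ts IH E sz aw => [|x l] IH E sz aw /=; first by rewrite cS arc.
have := new fS (negbT fS2); rewrite -sz /= => le.
rewrite gS size_cat size_map size_nseq arg all_cat.
move: (E aw) => /= /andP[-> ->] /=.
have -> : all (wf_tree ar Sigma) (nseq (k - (size l).+1) cnode).
  by elim: (k - _) => //= n ->; rewrite cS arc.
rewrite andbT; apply/eqP; lia.
Qed.

Lemma h_subst (sv : V -> tree A) (sc : C -> tree A) u :
  wf_term ar Sigma u ->
  h (subst sv sc u) = subst (fun x => h (sv x)) (fun X => h (sc X)) u.
Proof.
elim/term_ind2: u => [f ts IH|x|X t IH] /=.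
- move=> /and3P[fS _ aw]; rewrite fS; congr Node.
  rewrite -map_comp; elim: IH aw => //= x l Hx _ IHl /andP[/Hx -> /IHl ->] //.
- by [].
- by move=> /IH <-; rewrite h_fill.
Qed.

End Aux.

Theorem lemma3p4 (A : eqType) (ar : A -> nat) (V C : Type)
    (Sigma Sigma' : seq A) (k : nat) (u v : term A V C)
    (sv' : V -> tree A) (sc' : C -> tree A) :
  (exists2 c, c \in Sigma & ar c = 0) ->
  (forall f, f \in Sigma -> ar f <= k) ->
  (exists2 f, f \in Sigma & ar f = k) ->
  wf_term ar Sigma u -> wf_term ar Sigma v ->
  {subset Sigma <= Sigma'} ->
  (forall f, f \in Sigma' -> f \notin Sigma ->
     [/\ ~~ occurs f u, ~~ occurs f v & ar f <= k]) ->
  solution_over ar Sigma' sv' sc' u v ->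
  exists sv sc, solution_over ar Sigma sv sc u v /\
    nnodes (subst sv sc u) <= maxn k 1 * nnodes (subst sv' sc' u).
Proof.
move=> [c cS arc] _ [g gS arg] wu wv _ new [[Hsv Hsc] eq].
have new' : forall f, f \in Sigma' -> f \notin Sigma -> ar f <= k.
  by move=> f H1 H2; case: (new f H1 H2).
pose H := h Sigma k g c.
exists (fun x => H (sv' x)), (fun X => H (sc' X)); split; last first.
  by rewrite -(@h_subst _ ar _ _ Sigma k g c sv' sc' u wu) h_size.
split; last by rewrite -(@h_subst _ ar _ _ Sigma k g c sv' sc' u wu) -(@h_subst _ ar _ _ Sigma k g c sv' sc' v wv) eq.
split.
- move=> x; case/andP: (Hsv x) => w o; apply/andP; split.
    exact: (h_wf cS arc gS arg new' w).
  by rewrite h_omegas.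
- move=> X; case/andP: (Hsc X) => w o; apply/andP; split.
    exact: (h_wf cS arc gS arg new' w).
  by rewrite h_omegas.
Qed.
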